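(* The Cesàro operator $\mathcal C: VH(\mathbb D)\to VH(\mathbb D)$ is not power bounded, not mean ergodic and not supercyclic.
   Context: $\mathbb D$ is the open unit disc. Define $v(z)=1$ if $|z|\le 1-1/e$ and $v(z)=(-\log(1-|z|))^{-1}$ if $1-1/e\le|z|<1$, $v_k=v^k$, $H^\infty_{v_k}=\{f \text{ analytic on }\mathbb D:\sup_{z\in\mathbb D}v_k(z)|f(z)|<\infty\}$ normed by this sup, and $VH(\mathbb D)=\bigcup_kH^\infty_{v_k}$ with the finest locally convex topology making all inclusions continuous. The Cesàro operator is $\mathcal C f(z)=\frac1z\int_0^z\frac{f(\zeta)}{1-\zeta}\,d\zeta$ for $z\neq0$, $\mathcal Cf(0)=f(0)$. For a locally convex Hausdorff space $X$ and continuous linear $T:X\to X$: $T$ is power bounded if $\{T^n:n\in\mathbb N_0\}$ is equicontinuous; $T$ is mean ergodic if the Cesàro means $T_{[n]}=\frac1n\sum_{m=1}^nT^m$ converge pointwise on $X$ (i.e. $(T_{[n]}x)_n$ converges in $X$ for every $x\in X$); $T$ is supercyclic if there exists $z\in X$ with $\{\lambda T^nz:\lambda\in\mathbb C,n\in\mathbb N_0\}$ dense in $X$. *)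

(* Defs.v *)
From Stdlib Require Import Reals.
From Coquelicot Require Import Coquelicot.
Open Scope R_scope.

Definition inD (z : C) : Prop := Cmod z < 1.

(** The weight v and v_k = v^k (only values on the disc matter). *)
Definition v (z : C) : R :=
  if Rle_dec (Cmod z) (1 - / exp 1) then 1
  else / (- ln (1 - Cmod z)).

Definition vk (k : nat) (z : C) : R := (v z) ^ k.

Definition holo (f : C -> C) : Prop :=
  forall z, inD z -> ex_derive (K := C_AbsRing) (V := C_NormedModule) f z.

Definition wbound (k : nat) (f : C -> C) (M : R) : Prop :=
  forall z, inD z -> vk k z * Cmod (f z) <= M.

Definition Hv (k : nat) (f : C -> C) : Prop :=
  holo f /\ exists M, wbound k f M.

Definition VH (f : C -> C) : Prop := exists k, Hv k f.

Definition fadd (f g : C -> C) : C -> C := fun z => (f z + g z)%C.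
Definition fsub (f g : C -> C) : C -> C := fun z => (f z - g z)%C.
Definition fscal (a : C) (f : C -> C) : C -> C := fun z => (a * f z)%C.

Definition seminorm_VH (p : (C -> C) -> R) : Prop :=
  (forall f, VH f -> 0 <= p f) /\
  (forall f g, VH f -> VH g -> p (fadd f g) <= p f + p g) /\
  (forall a f, VH f -> p (fscal a f) = Cmod a * p f).

(** Continuous seminorms for the inductive limit topology (finest locally convex
    topology making all inclusions H^infty_{v_k} -> VH continuous): exactly the
    seminorms whose restriction to each H^infty_{v_k} is continuous, i.e.
    p f <= c * ||f||_{v_k} (stated as: p f <= c*M for every bound M of the
    weighted sup). These seminorms generate the topology of VH(D). *)
Definition cont_seminorm (p : (C -> C) -> R) : Prop :=
  seminorm_VH p /\
  forall k, exists c, forall f M, Hv k f -> wbound k f M -> p f <= c * M.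

Definition cint0 (g : C -> C) (z : C) : C :=
  RInt (V := C_R_CompleteNormedModule) (fun t : R => (g (RtoC t * z) * z)%C) 0 1.

Definition Ces (f : C -> C) : C -> C :=
  fun z => if Req_EM_T (Cmod z) 0 then f (RtoC 0)
           else (/ z * cint0 (fun w => (f w / (RtoC 1 - w))%C) z)%C.

Definition powop (T : (C -> C) -> (C -> C)) (n : nat) (f : C -> C) : C -> C :=
  Nat.iter n T f.

Fixpoint psum (T : (C -> C) -> (C -> C)) (n : nat) (f : C -> C) : C -> C :=
  match n with
  | O => fun _ => RtoC 0
  | S n' => fadd (psum T n' f) (powop T (S n') f)
  end.

Definition cesmean (T : (C -> C) -> (C -> C)) (n : nat) (f : C -> C) : C -> C :=
  fscal (RtoC (/ INR n)) (psum T n f).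

Definition power_bounded_VH (T : (C -> C) -> (C -> C)) : Prop :=
  forall p, cont_seminorm p ->
    exists q, cont_seminorm q /\
      forall (n : nat) f, VH f -> p (powop T n f) <= q f.

Definition mean_ergodic_VH (T : (C -> C) -> (C -> C)) : Prop :=
  forall f, VH f -> exists g, VH g /\
    forall p, cont_seminorm p ->
      is_lim_seq (fun n : nat => p (fsub (cesmean T (S n) f) g)) 0.

Definition supercyclic_VH (T : (C -> C) -> (C -> C)) : Prop :=
  exists z, VH z /\
    forall g, VH g -> forall p, cont_seminorm p -> forall eps, 0 < eps ->
      exists (lam : C) (n : nat), p (fsub (fscal lam (powop T n z)) g) < eps.

(* Main.v *)
Require Import Defs.
From Stdlib Require Import Reals Lra Lia Factorial Arith.
From Coquelicot Require Import Coquelicot.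
Open Scope R_scope.

Definition ccont (phi : R -> C) (r : R) := forall eps, 0 < eps ->
  exists d, 0 < d /\ forall s, Rabs (s - r) < d -> Cmod (phi s - phi r)%C < eps.

Lemma Cmod_RtoC (x : R) : Cmod (RtoC x) = Rabs x.
Proof. apply Cmod_R. Qed.

Lemma ccont_scal (g : R -> R) phi r :
  continuity_pt g r -> ccont phi r -> ccont (fun s => (RtoC (g s) * phi s)%C) r.
Proof.
  intros Hg Hp eps Heps.
  set (A := Cmod (phi r) + 1). set (B := Rabs (g r) + 1).
  assert (HA : 0 < A) by (unfold A; pose proof (Cmod_ge_0 (phi r)); lra).
  assert (HB : 0 < B) by (unfold B; pose proof (Rabs_pos (g r)); lra).
  destruct (Hp (Rmin 1 (eps / (2 * B)))) as [d1 [Hd1 H1]].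
  { apply Rmin_pos; [lra|]. apply Rdiv_lt_0_compat; lra. }
  destruct (Hg (eps / (2 * A))) as [d2 [Hd2 H2]].
  { apply Rdiv_lt_0_compat; lra. }
  exists (Rmin d1 d2); split; [apply Rmin_pos; lra|].
  intros s Hs.
  assert (Hs1 : Rabs (s - r) < d1) by (eapply Rlt_le_trans; [exact Hs| apply Rmin_l]).
  assert (Hs2 : Rabs (s - r) < d2) by (eapply Rlt_le_trans; [exact Hs| apply Rmin_r]).
  specialize (H1 s Hs1).
  assert (H2' : Rabs (g s - g r) < eps / (2 * A)).
  { destruct (Req_dec s r) as [->|Hne].
    - rewrite Rminus_diag, Rabs_R0. apply Rdiv_lt_0_compat; lra.
    - apply (H2 s). split. { unfold D_x, no_cond. split; auto. }
      simpl. unfold Rdist. exact Hs2. }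
  replace (RtoC (g s) * phi s - RtoC (g r) * phi r)%C with
    (RtoC (g s - g r) * phi s + RtoC (g r) * (phi s - phi r))%C
    by (unfold RtoC; apply injective_projections; simpl; ring).
  eapply Rle_lt_trans; [apply Cmod_triangle|].
  rewrite !Cmod_mult, !Cmod_RtoC.
  assert (Hps : Cmod (phi s) <= A).
  { unfold A. replace (phi s) with (phi r + (phi s - phi r))%C by ring.
    eapply Rle_trans; [apply Cmod_triangle|].
    pose proof (Rmin_l 1 (eps / (2 * B))). apply Rplus_le_compat_l. left. eapply Rlt_le_trans; [exact H1|exact H]. }
  assert (Hm : Cmod (phi s - phi r) < eps / (2 * B)).
  { eapply Rlt_le_trans; [exact H1| apply Rmin_r]. }
  assert (E1 : Rabs (g s - g r) * Cmod (phi s) <= eps / (2 * A) * A).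
  { apply Rmult_le_compat; try apply Rabs_pos; try apply Cmod_ge_0; lra. }
  assert (E2 : Rabs (g r) * Cmod (phi s - phi r) <= B * (eps / (2 * B))).
  { apply Rmult_le_compat; try apply Rabs_pos; try apply Cmod_ge_0; try lra; unfold B; lra. }
  assert (eps / (2 * A) * A = eps / 2) by (field; lra).
  assert (B * (eps / (2 * B)) = eps / 2) by (field; lra).
  destruct (Req_dec (g s) (g r)) as [Heq|Hne].
  - rewrite Heq, Rminus_diag, Rabs_R0, Rmult_0_l.
    pose proof (Rabs_pos (g r)).
    assert (Rabs (g r) * Cmod (phi s - phi r) < eps / 2 ) .
    { destruct (Req_dec (Rabs (g r)) 0) as [Z|Z]. rewrite Z; lra.
      apply Rle_lt_trans with (Rabs (g r) * (eps / (2*B))).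
      apply Rmult_le_compat_l; lra.
      apply Rlt_le_trans with (B * (eps / (2*B))). apply Rmult_lt_compat_r.
      apply Rdiv_lt_0_compat; lra. unfold B; lra. lra. }
    lra.
  - assert (Rabs (g s - g r) * Cmod (phi s) < eps / 2).
    { apply Rle_lt_trans with (Rabs (g s - g r) * A).
      apply Rmult_le_compat_l; [apply Rabs_pos|lra].
      apply Rlt_le_trans with (eps / (2 * A) * A); [|lra].
      apply Rmult_lt_compat_r; lra. }
    lra.
Qed.

Definition RC (f : C -> C) := forall r, -1 < r < 1 -> ccont (fun s => f (RtoC s)) r.

Lemma holo_RC f : holo f -> RC f.
Proof.
  intros Hf r Hr eps Heps.
  assert (Hin : inD (RtoC r)) by (unfold inD; rewrite Cmod_RtoC; apply Rabs_def1; lra).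
  pose proof (ex_derive_continuous _ _ (Hf _ Hin)) as Hc.
  apply filterlim_locally with (eps := mkposreal (eps / sqrt 2) ltac:(apply Rdiv_lt_0_compat; [lra| apply sqrt_lt_R0; lra])) in Hc.
  destruct Hc as [d Hd].
  exists d; split; [apply cond_pos|].
  intros s Hs.
  assert (Hb : @ball (AbsRing_UniformSpace C_AbsRing) (RtoC r) d (RtoC s)).
  { simpl. unfold AbsRing_ball.
    assert (E : @minus C_AbsRing (RtoC s) (RtoC r) = RtoC (s - r)).
    { unfold minus, plus, opp; simpl. unfold RtoC; apply injective_projections; simpl; ring. }
    change (@abs C_AbsRing (@minus C_AbsRing (RtoC s) (RtoC r)) < d). rewrite E. unfold abs; simpl. rewrite Cmod_RtoC. exact Hs. }
  specialize (Hd _ Hb).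
  apply C_NormedModule_mixin_compat2 in Hd. simpl in Hd.
  replace (f (RtoC s) - f (RtoC r))%C with (minus (f (RtoC s)) (f (RtoC r))) by reflexivity.
  replace eps with (sqrt 2 * (eps / sqrt 2)). exact Hd.
  field. apply Rgt_not_eq, sqrt_lt_R0; lra.
Qed.

Lemma norm_CR (x : C) : @norm R_AbsRing C_R_NormedModule x = Cmod x.
Proof.
  destruct x as [a b]. unfold Cmod. change (sqrt (norm a ^ 2 + norm b ^ 2) = sqrt (a ^ 2 + b ^ 2)). unfold norm; simpl. unfold abs; simpl.
  rewrite !Rmult_1_r, <- !Rabs_mult, !Rabs_right; try reflexivity; apply Rle_ge, Rle_0_sqr.
Qed.

Lemma ccont_continuous (phi : R -> C) r :
  ccont phi r -> @continuous R_UniformSpace C_R_NormedModule phi r.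
Proof.
  intros H. apply filterlim_locally. intros eps.
  destruct (H eps (cond_pos eps)) as [d [Hd Hs]].
  exists (mkposreal d Hd). intros s Hb. specialize (Hs s Hb).
  pose proof (Rmax_Cmod (phi s - phi r)%C) as HM.
  split; simpl; unfold AbsRing_ball; simpl; unfold abs, minus, plus, opp; simpl.
  - eapply Rle_lt_trans; [|exact Hs]. eapply Rle_trans; [|exact HM]. apply Rmax_l.
  - eapply Rle_lt_trans; [|exact Hs]. eapply Rle_trans; [|exact HM]. apply Rmax_r.
Qed.

Definition hk (f : C -> C) (s : R) : C := (f (RtoC s) / (RtoC 1 - RtoC s))%C.

Lemma Cinv_RtoC (x : R) : x <> 0 -> Cinv (RtoC x) = RtoC (/ x).
Proof.
  intros H. unfold Cinv, RtoC; simpl. apply injective_projections; simpl; field; auto.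
Qed.

Lemma hk_eq f s : s <> 1 -> hk f s = (RtoC (/ (1 - s)) * f (RtoC s))%C.
Proof.
  intros H. unfold hk.
  replace (RtoC 1 - RtoC s)%C with (RtoC (1 - s)) by
    (unfold RtoC; apply injective_projections; simpl; ring).
  unfold Cdiv. rewrite Cinv_RtoC by lra. apply Cmult_comm.
Qed.

Lemma ccont_ext (phi psi : R -> C) r d : 0 < d ->
  (forall s, Rabs (s - r) < d -> phi s = psi s) -> ccont phi r -> ccont psi r.
Proof.
  intros Hd He H eps Heps. destruct (H eps Heps) as [d1 [Hd1 H1]].
  exists (Rmin d d1). split; [apply Rmin_pos; lra|].
  intros s Hs. rewrite <- !He.
  - apply H1. eapply Rlt_le_trans; [exact Hs|apply Rmin_r].
  - rewrite Rminus_diag, Rabs_R0; lra.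
  - eapply Rlt_le_trans; [exact Hs|apply Rmin_l].
Qed.

Lemma RC_hk f : RC f -> forall s, -1 < s < 1 -> ccont (hk f) s.
Proof.
  intros Hf s Hs.
  apply ccont_ext with (fun u => (RtoC (/ (1 - u)) * f (RtoC u))%C) (1 - s); [lra| |].
  - intros u Hu. symmetry. apply hk_eq. intro E. subst u.
    rewrite Rabs_right in Hu; lra.
  - apply ccont_scal; [|apply Hf; auto].
    apply continuity_pt_inv. apply continuity_pt_minus. apply continuity_pt_const. intros a b; auto.
    apply continuity_pt_id. lra.
Qed.

Lemma ccont_lin (phi : R -> C) r t : ccont phi (t * r) -> ccont (fun u => phi (u * r)) t.
Proof.
  intros H eps Heps. destruct (H eps Heps) as [d [Hd H1]].
  exists (d / (Rabs r + 1)). split.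
  { apply Rdiv_lt_0_compat; [lra|]. pose proof (Rabs_pos r); lra. }
  intros s Hs. apply H1.
  replace (s * r - t * r) with ((s - t) * r) by ring. rewrite Rabs_mult.
  pose proof (Rabs_pos r). pose proof (Rabs_pos (s - t)).
  apply Rle_lt_trans with (Rabs (s - t) * (Rabs r + 1)). 
  apply Rmult_le_compat_l; lra.
  apply Rlt_le_trans with (d / (Rabs r + 1) * (Rabs r + 1)).
  apply Rmult_lt_compat_r; lra. right; field; lra.
Qed.

Lemma hk_lin_ex f r : RC f -> -1 < r < 1 ->
  @ex_RInt C_R_NormedModule (fun t => hk f (t * r)) 0 1.
Proof.
  intros Hf Hr. apply (@ex_RInt_continuous C_R_CompleteNormedModule).
  intros t Ht. rewrite Rmin_left in Ht by lra. rewrite Rmax_right in Ht by lra.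
  apply ccont_continuous. apply ccont_lin. apply RC_hk; auto.
  destruct Hr; destruct Ht; split.
  - destruct (Rle_dec 0 r); nra.
  - destruct (Rle_dec 0 r); nra.
Qed.

Lemma Ces_RInt f r : RC f -> -1 < r < 1 ->
  Ces f (RtoC r) = @RInt C_R_CompleteNormedModule (fun t => hk f (t * r)) 0 1.
Proof.
  intros Hf Hr. unfold Ces.
  destruct (Req_EM_T (Cmod (RtoC r)) 0) as [E|E].
  - rewrite Cmod_RtoC in E. assert (r = 0) by (destruct (Rabs_pos r); [|]; 
      apply Rabs_eq_0 in E; auto). subst r.
    rewrite (@RInt_ext C_R_CompleteNormedModule _ (fun _ => hk f 0)).
    + rewrite RInt_const. rewrite hk_eq by lra.
      rewrite Rminus_0_r, Rinv_1. rewrite scal_R_Cmult. unfold RtoC. 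
      apply injective_projections; simpl; ring.
    + intros x _. rewrite Rmult_0_r. reflexivity.
  - rewrite Cmod_RtoC in E. assert (Hr0 : r <> 0) by (intro; subst; rewrite Rabs_R0 in E; auto).
    unfold cint0.
    rewrite (@RInt_ext C_R_CompleteNormedModule _ (fun t => @scal R_AbsRing C_R_NormedModule r (hk f (t * r)))).
    + rewrite (@RInt_scal C_R_CompleteNormedModule) by (apply hk_lin_ex; auto).
      rewrite scal_R_Cmult. rewrite Cmult_assoc. rewrite Cinv_l. apply Cmult_1_l.
      intro H. apply Hr0. apply (f_equal fst) in H. exact H.
    + intros x _. rewrite scal_R_Cmult. unfold hk. rewrite RtoC_mult. apply Cmult_comm.
Qed.

Lemma Ces_is_RInt f r : RC f -> -1 < r < 1 ->
  @is_RInt C_R_NormedModule (fun t => hk f (t * r)) 0 1 (Ces f (RtoC r)).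
Proof.
  intros Hf Hr. rewrite Ces_RInt by auto. apply (@RInt_correct C_R_CompleteNormedModule).
  apply hk_lin_ex; auto.
Qed.

Lemma Ces_RC f : RC f -> RC (Ces f).
Proof.
  intros Hf r0 Hr0 eps Heps.
  set (rho := (1 + Rabs r0) / 2).
  assert (Hrho : Rabs r0 < rho < 1) by (unfold rho; 
     destruct (Rle_dec 0 r0); [rewrite Rabs_right by lra| rewrite Rabs_left by lra]; lra).
  assert (Hc : forall x, - rho <= x <= rho -> @continuous R_UniformSpace C_R_NormedModule (hk f) x).
  { intros x Hx. apply ccont_continuous. apply RC_hk; auto. lra. }
  destruct (@unifcont_normed_1d R_AbsRing C_R_NormedModule (hk f) (- rho) rho Hc
     (mkposreal (eps / 2) ltac:(lra))) as [d Hd].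
  exists (Rmin d (rho - Rabs r0)). split.
  { apply Rmin_pos; [apply cond_pos| lra]. }
  intros s Hs.
  assert (Hs1 : Rabs (s - r0) < d) by (eapply Rlt_le_trans; [exact Hs|apply Rmin_l]).
  assert (Hs2 : Rabs (s - r0) < rho - Rabs r0) by (eapply Rlt_le_trans; [exact Hs|apply Rmin_r]).
  assert (Hsr : Rabs s < rho).
  { replace s with (r0 + (s - r0)) by ring. eapply Rle_lt_trans; [apply Rabs_triang|]. lra. }
  assert (Hs' : -1 < s < 1) by (destruct (Rabs_def2 s rho Hsr); split; lra).
  pose proof (Ces_is_RInt f s Hf Hs') as I1.
  pose proof (Ces_is_RInt f r0 Hf Hr0) as I2.
  pose proof (@is_RInt_minus C_R_NormedModule _ _ 0 1 _ _ I1 I2) as I3.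
  pose proof (@is_RInt_const R_NormedModule 0 1 (eps / 2)) as I4.
  assert (Hpt : forall t, 0 <= t <= 1 -> 
     @norm R_AbsRing C_R_NormedModule (minus (hk f (t * s)) (hk f (t * r0))) <= eps / 2).
  { intros t Ht. left.
    assert (Ht1 : Rabs (t * s) <= Rabs s) by (rewrite Rabs_mult, (Rabs_right t) by lra; 
      pose proof (Rabs_pos s); nra).
    assert (Ht2 : Rabs (t * r0) <= Rabs r0) by (rewrite Rabs_mult, (Rabs_right t) by lra; 
      pose proof (Rabs_pos r0); nra).
    assert (B1 : - rho <= t * r0 <= rho) by (apply Rabs_le_between; lra).
    assert (B2 : - rho <= t * s <= rho) by (apply Rabs_le_between; lra).
    refine (Hd (t * r0) (t * s) B1 B2 _).
    change (Rabs (t * s - t * r0) < d).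
    replace (t * s - t * r0) with (t * (s - r0)) by ring.
    rewrite Rabs_mult, (Rabs_right t) by lra. 
    apply Rle_lt_trans with (Rabs (s - r0)); [|exact Hs1].
    pose proof (Rabs_pos (s - r0)); nra. }
  pose proof (norm_RInt_le _ _ 0 1 _ _ ltac:(lra) Hpt I3 I4) as Hle.
  rewrite norm_CR in Hle. change (scal (1 - 0) (eps / 2)) with ((1 - 0) * (eps / 2)) in Hle.
  change (Cmod (Ces f (RtoC s) - Ces f (RtoC r0))%C < eps). 
  eapply Rle_lt_trans; [exact Hle| lra].
Qed.

Lemma powop_S T n f : powop T (S n) f = T (powop T n f).
Proof. reflexivity. Qed.

Lemma Ces_0 f : Ces f (RtoC 0) = f (RtoC 0).
Proof.
  unfold Ces. destruct (Req_EM_T (Cmod (RtoC 0)) 0) as [_|E]; auto.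
  exfalso. apply E. rewrite Cmod_RtoC. apply Rabs_R0.
Qed.

Lemma powop_0 n f : powop Ces n f (RtoC 0) = f (RtoC 0).
Proof. induction n; auto. rewrite powop_S, Ces_0. auto. Qed.

Lemma powop_RC n f : RC f -> RC (powop Ces n f).
Proof. intros H; induction n; auto. rewrite powop_S. apply Ces_RC; auto. Qed.

Lemma Cmod_hk f s : s < 1 -> Cmod (hk f s) = Cmod (f (RtoC s)) / (1 - s).
Proof.
  intros Hs. rewrite hk_eq by lra. rewrite Cmod_mult, Cmod_RtoC.
  rewrite Rabs_right. unfold Rdiv; ring.
  apply Rle_ge, Rlt_le, Rinv_0_lt_compat; lra.
Qed.

Lemma Ces_bound f A : RC f ->
  (forall s, 0 <= s <= 1/2 -> Cmod (f (RtoC s)) <= A / (1 - s)) ->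
  forall r, 0 <= r <= 1/2 -> Cmod (Ces f (RtoC r)) <= A / (1 - r).
Proof.
  intros Hf HA r Hr.
  assert (A0 : 0 <= A).
  { specialize (HA 0 ltac:(lra)). pose proof (Cmod_ge_0 (f (RtoC 0))).
    replace (A / (1 - 0)) with A in HA by field. lra. }
  pose proof (Ces_is_RInt f r Hf ltac:(lra)) as I1.
  assert (I2 : is_RInt (fun t => A / (1 - t * r) ^ 2) 0 1 (A / (1 - r))).
  { replace (A / (1 - r)) with (@minus R_AbelianGroup ((fun t => A * t / (1 - t * r)) 1) ((fun t => A * t / (1 - t * r)) 0)).
    apply (@is_RInt_derive R_CompleteNormedModule (fun t => A * t / (1 - t * r)) (fun t => A / (1 - t * r) ^ 2)).
    - intros x Hx. rewrite Rmin_left in Hx by lra. rewrite Rmax_right in Hx by lra.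
      auto_derive. nra. field. nra.
    - intros x Hx. rewrite Rmin_left in Hx by lra. rewrite Rmax_right in Hx by lra.
      apply (@ex_derive_continuous R_AbsRing R_NormedModule). auto_derive. nra.
    - unfold minus, plus, opp; simpl. field. lra. }
  assert (Hpt : forall t, 0 <= t <= 1 ->
     @norm R_AbsRing C_R_NormedModule (hk f (t * r)) <= A / (1 - t * r) ^ 2).
  { intros t Ht. rewrite norm_CR, Cmod_hk by nra.
    assert (H1 : Cmod (f (RtoC (t * r))) <= A / (1 - t * r)) by (apply HA; nra).
    replace (A / (1 - t * r) ^ 2) with (A / (1 - t * r) / (1 - t * r)) by (field; nra).
    unfold Rdiv. apply Rmult_le_compat_r. apply Rlt_le, Rinv_0_lt_compat; nra. exact H1. }
  pose proof (norm_RInt_le _ _ 0 1 _ _ ltac:(lra) Hpt I1 I2) as Hle.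
  rewrite norm_CR in Hle. exact Hle.
Qed.

Lemma powop_bound n f A : RC f ->
  (forall s, 0 <= s <= 1/2 -> Cmod (f (RtoC s)) <= A / (1 - s)) ->
  forall r, 0 <= r <= 1/2 -> Cmod (powop Ces n f (RtoC r)) <= A / (1 - r).
Proof.
  intros Hf HA. induction n; auto. rewrite powop_S.
  apply Ces_bound; auto. apply powop_RC; auto.
Qed.

Lemma exp1_gt2 : 2 < exp 1.
Proof. pose proof (exp_ineq1 1 ltac:(lra)). lra. Qed.

Lemma vk_small k z : Cmod z <= 1 - / exp 1 -> vk k z = 1.
Proof.
  intros H. unfold vk, v. destruct (Rle_dec (Cmod z) (1 - / exp 1)); [apply pow1| contradiction].
Qed.

Lemma small0 : Cmod (RtoC 0) <= 1 - / exp 1.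
Proof.
  rewrite Cmod_RtoC, Rabs_R0. pose proof exp1_gt2.
  assert (/ exp 1 < 1/2). { apply Rlt_le_trans with (/ 2). apply Rinv_lt_contravar; lra. lra. }
  lra.
Qed.

Lemma small_half : Cmod (RtoC (1/2)) <= 1 - / exp 1.
Proof.
  rewrite Cmod_RtoC, Rabs_right by lra. pose proof exp1_gt2.
  assert (/ exp 1 < 1/2). { apply Rlt_le_trans with (/ 2). apply Rinv_lt_contravar; lra. lra. }
  lra.
Qed.

Lemma inD_R r : -1 < r < 1 -> inD (RtoC r).
Proof. intros H. unfold inD. rewrite Cmod_RtoC. apply Rabs_def1; lra. Qed.

Definition p2 (f : C -> C) : R := Cmod (f (RtoC 0)) + Cmod (f (RtoC (1/2))).

Lemma p2_cont : cont_seminorm p2.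
Proof.
  split; [split; [|split]|].
  - intros f _. unfold p2. pose proof (Cmod_ge_0 (f (RtoC 0))). pose proof (Cmod_ge_0 (f (RtoC (1/2)))). lra.
  - intros f g _ _. unfold p2, fadd.
    pose proof (Cmod_triangle (f (RtoC 0)) (g (RtoC 0))).
    pose proof (Cmod_triangle (f (RtoC (1/2))) (g (RtoC (1/2)))). lra.
  - intros a f _. unfold p2, fscal. rewrite !Cmod_mult. ring.
  - intros k. exists 2. intros f M _ HM. unfold p2.
    pose proof (HM (RtoC 0) (inD_R 0 ltac:(lra))) as H0.
    pose proof (HM (RtoC (1/2)) (inD_R (1/2) ltac:(lra))) as H1.
    rewrite vk_small in H0 by apply small0. rewrite vk_small in H1 by apply small_half. lra.
Qed.

Definition gaff (c : C) : C -> C := fun u => (RtoC 1 + u * c)%C.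

Lemma gaff_VH c : VH (gaff c).
Proof.
  exists 0%nat. split.
  - intros z _. unfold gaff.
    apply (@ex_derive_plus C_AbsRing C_NormedModule (fun _ => RtoC 1) (fun u => scal u c)).
    + apply ex_derive_const.
    + eexists. apply (@is_derive_scal_l C_AbsRing C_NormedModule (fun u => u)). apply is_derive_id.
  - exists (1 + Cmod c). intros z Hz. unfold vk. rewrite pow_O, Rmult_1_l. unfold gaff.
    eapply Rle_trans; [apply Cmod_triangle|]. rewrite Cmod_1, Cmod_mult.
    unfold inD in Hz. pose proof (Cmod_ge_0 c). pose proof (Cmod_ge_0 z). nra.
Qed.

Theorem not_super : ~ supercyclic_VH Ces.
Proof.
  intros [z [[k [Hh [M HM]]] Hd]].
  pose proof (holo_RC z Hh) as Hz.
  assert (M0 : 0 <= M).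
  { pose proof (HM (RtoC 0) (inD_R 0 ltac:(lra))). rewrite vk_small in H by apply small0.
    pose proof (Cmod_ge_0 (z (RtoC 0))). lra. }
  assert (Hb0 : forall s, 0 <= s <= 1/2 -> Cmod (z (RtoC s)) <= M / (1 - s)).
  { intros s Hs. pose proof (HM (RtoC s) (inD_R s ltac:(lra))) as H.
    rewrite vk_small in H. 
    - rewrite Rmult_1_l in H. eapply Rle_trans; [exact H|].
      unfold Rdiv. rewrite <- (Rmult_1_r M) at 1. apply Rmult_le_compat_l; auto.
      rewrite <- Rinv_1. apply Rinv_le_contravar; lra.
    - eapply Rle_trans; [|apply small_half]. rewrite !Cmod_RtoC, !Rabs_right; lra. }
  set (a := z (RtoC 0)).
  set (W := 3 * M / (Cmod a + 1) + 1 + 3 * M / Cmod a).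
  set (g := gaff (RtoC (2 * (W - 1)))).
  destruct (Hd g (gaff_VH _) p2 p2_cont (1/2) ltac:(lra)) as [lam [n Hn]].
  unfold p2, fsub, fscal, g, gaff in Hn. rewrite powop_0 in Hn. fold a in Hn.
  pose proof (powop_bound n z M Hz Hb0 (1/2) ltac:(lra)) as Hb.
  set (b := powop Ces n z (RtoC (1/2))) in *.
  replace (M / (1 - 1/2)) with (2 * M) in Hb by field.
  replace (RtoC 1 + RtoC 0 * RtoC (2 * (W - 1)))%C with (RtoC 1) in Hn 
    by (unfold RtoC; apply injective_projections; simpl; ring).
  replace (RtoC 1 + RtoC (1/2) * RtoC (2 * (W - 1)))%C with (RtoC W) in Hn 
    by (unfold RtoC; apply injective_projections; simpl; field).
  pose proof (Cmod_ge_0 (lam * b - RtoC W)%C) as P1.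
  assert (H1 : Cmod (lam * a - RtoC 1)%C < 1/2) by lra.
  assert (Ha : 0 < Cmod a).
  { destruct (Cmod_ge_0 a) as [|E]; auto. apply eq_sym, Cmod_eq_0 in E. rewrite E in H1.
    replace (lam * 0 - RtoC 1)%C with (- (1))%C in H1 by ring. rewrite Cmod_m1 in H1. lra. }
  assert (H2 : Cmod lam * Cmod a < 3/2).
  { rewrite <- Cmod_mult. replace (lam * a)%C with ((lam * a - RtoC 1) + RtoC 1)%C by ring.
    eapply Rle_lt_trans; [apply Cmod_triangle|]. rewrite Cmod_RtoC, Rabs_R1. lra. }
  assert (H3 : Cmod lam < 3 / (2 * Cmod a)).
  { apply Rmult_lt_reg_r with (Cmod a); auto. replace (3 / (2 * Cmod a) * Cmod a) with (3/2) by (field; lra). lra. }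
  assert (H4 : Cmod (lam * b) <= 3 * M / Cmod a).
  { rewrite Cmod_mult. pose proof (Cmod_ge_0 lam). pose proof (Cmod_ge_0 b).
    apply Rle_trans with (3 / (2 * Cmod a) * (2 * M)).
    apply Rmult_le_compat; lra. right; field; lra. }
  assert (HW : 0 < W).
  { unfold W. assert (0 <= 3 * M / (Cmod a + 1)) by (apply Rmult_le_pos; [lra| apply Rlt_le, Rinv_0_lt_compat; lra]).
    assert (0 <= 3 * M / Cmod a) by (apply Rmult_le_pos; [lra| apply Rlt_le, Rinv_0_lt_compat; lra]). lra. }
  assert (H5 : W <= Cmod (lam * b - RtoC W)%C + Cmod (lam * b)).
  { rewrite <- (Rabs_right W) at 1 by lra. rewrite <- Cmod_RtoC.
    replace (RtoC W) with (- (lam * b - RtoC W) + lam * b)%C at 1 by ring.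
    eapply Rle_trans; [apply Cmod_triangle|]. rewrite Cmod_opp. lra. }
  assert (0 <= 3 * M / (Cmod a + 1)) by (apply Rmult_le_pos; [lra| apply Rlt_le, Rinv_0_lt_compat; lra]).
  assert (1 + 3 * M / Cmod a <= W) by (unfold W; lra). pose proof (Cmod_ge_0 (lam * a - RtoC 1)%C). lra.
Qed.

Definition cone : C -> C := fun _ => RtoC 1.
Definition Hn (n : nat) (r : R) : R := Re (powop Ces n cone (RtoC r)).

Lemma one_VH : Hv 0 cone.
Proof.
  split. - intros z _. apply ex_derive_const.
  - exists 1. intros z _. unfold vk, cone. rewrite pow_O, Cmod_RtoC, Rabs_R1. lra.
Qed.

Lemma RC_pow_one n : RC (powop Ces n cone).
Proof. apply powop_RC, holo_RC. apply one_VH. Qed.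

Lemma hk_lin_fst f r :
  @is_RInt C_R_NormedModule (fun t => hk f (t * r)) 0 1 (Ces f (RtoC r)) ->
  is_RInt (fun t => Re (hk f (t * r))) 0 1 (Re (Ces f (RtoC r))).
Proof. intros H. apply (@is_RInt_fct_extend_fst R_NormedModule R_NormedModule) in H. exact H. Qed.

Lemma hk_lin_snd f r :
  @is_RInt C_R_NormedModule (fun t => hk f (t * r)) 0 1 (Ces f (RtoC r)) ->
  is_RInt (fun t => Im (hk f (t * r))) 0 1 (Im (Ces f (RtoC r))).
Proof. intros H. apply (@is_RInt_fct_extend_snd R_NormedModule R_NormedModule) in H. exact H. Qed.

Lemma Im_pow_one n r : -1 < r < 1 -> Im (powop Ces n cone (RtoC r)) = 0.
Proof.
  revert r. induction n; intros r Hr.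
  - reflexivity.
  - rewrite powop_S.
    pose proof (hk_lin_snd _ _ (Ces_is_RInt _ r (RC_pow_one n) Hr)) as I.
    assert (I2 : is_RInt (fun t => Im (hk (powop Ces n cone) (t * r))) 0 1 0).
    { apply (is_RInt_ext (fun _ => 0)).
      - intros t Ht. rewrite Rmin_left in Ht by lra. rewrite Rmax_right in Ht by lra.
        rewrite hk_eq by nra. rewrite im_scal_l. rewrite IHn by (split; nra). symmetry; apply Rmult_0_r.
      - pose proof (@is_RInt_const R_NormedModule 0 1 0) as K.
        change (scal (1 - 0) 0) with ((1 - 0) * 0) in K. rewrite Rmult_0_r in K. exact K. }
    apply (@is_RInt_unique R_CompleteNormedModule) in I. apply (@is_RInt_unique R_CompleteNormedModule) in I2. rewrite I in I2. exact I2.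
Qed.

Lemma pow_one_real n r : -1 < r < 1 -> powop Ces n cone (RtoC r) = RtoC (Hn n r).
Proof.
  intros Hr. unfold Hn. apply injective_projections; simpl; auto.
  apply Im_pow_one; auto.
Qed.

Lemma Hn_RInt n r : -1 < r < 1 ->
  is_RInt (fun t => Hn n (t * r) / (1 - t * r)) 0 1 (Hn (S n) r).
Proof.
  intros Hr.
  pose proof (hk_lin_fst _ _ (Ces_is_RInt _ r (RC_pow_one n) Hr)) as I.
  eapply is_RInt_ext; [|exact I].
  intros t Ht. rewrite Rmin_left in Ht by lra. rewrite Rmax_right in Ht by lra.
  cbv beta. rewrite hk_eq by nra. rewrite re_scal_l. unfold Hn. unfold Rdiv. apply Rmult_comm.
Qed.

Lemma Hn_0 n : Hn n 0 = 1.
Proof. unfold Hn. rewrite powop_0. reflexivity. Qed.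

Lemma Hn0 r : Hn 0 r = 1.
Proof. reflexivity. Qed.

Lemma is_RInt_const1 (c : R) : is_RInt (fun _ => c) 0 1 c.
Proof.
  pose proof (@is_RInt_const R_NormedModule 0 1 c) as K.
  change (scal (1 - 0) c) with ((1 - 0) * c) in K. rewrite Rminus_0_r, Rmult_1_l in K. exact K.
Qed.

Lemma Hn_mono n r : 0 <= r < 1 -> Hn n r <= Hn (S n) r.
Proof.
  revert r. induction n; intros r Hr.
  - rewrite Hn0. apply (is_RInt_le (fun _ => 1) (fun t => Hn 0 (t * r) / (1 - t * r)) 0 1).
    + lra.
    + apply is_RInt_const1.
    + apply Hn_RInt; lra.
    + intros t Ht. rewrite Hn0. unfold Rdiv. rewrite Rmult_1_l.
      rewrite <- Rinv_1 at 1. apply Rinv_le_contravar; nra.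
  - apply (is_RInt_le (fun t => Hn n (t * r) / (1 - t * r)) (fun t => Hn (S n) (t * r) / (1 - t * r)) 0 1).
    + lra.
    + apply Hn_RInt; lra.
    + apply Hn_RInt; lra.
    + intros t Ht. unfold Rdiv. apply Rmult_le_compat_r.
      apply Rlt_le, Rinv_0_lt_compat; nra. apply IHn. split; nra.
Qed.

Lemma Hn_mono_le m n r : (m <= n)%nat -> 0 <= r < 1 -> Hn m r <= Hn n r.
Proof.
  intros Hmn Hr. induction Hmn; [lra|]. eapply Rle_trans; [exact IHHmn| apply Hn_mono; auto].
Qed.

Lemma Hn_ge1 n r : 0 <= r < 1 -> 1 <= Hn n r.
Proof. intros Hr. rewrite <- (Hn0 r). apply Hn_mono_le; [lia|auto]. Qed.

Definition Lf (r : R) : R := - ln (1 - r).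

Lemma Lf_nonneg r : 0 <= r < 1 -> 0 <= Lf r.
Proof.
  intros Hr. unfold Lf.
  assert (ln (1 - r) <= ln 1) by (apply ln_le; lra). rewrite ln_1 in H. lra.
Qed.

Lemma Lf0 : Lf 0 = 0.
Proof. unfold Lf. rewrite Rminus_0_r, ln_1. ring. Qed.

Lemma Hn_lower n r : 0 <= r < 1 -> Lf r ^ n / INR (fact n) <= Hn n r.
Proof.
  revert r. induction n; intros r Hr.
  - simpl. rewrite Hn0. lra.
  - destruct (Req_dec r 0) as [->|Hr0].
    + rewrite Lf0, pow_i by lia. unfold Rdiv. rewrite Rmult_0_l. 
      pose proof (Hn_ge1 (S n) 0 ltac:(lra)). lra.
    + assert (I : is_RInt (fun t => Lf (t * r) ^ n / INR (fact n) / (1 - t * r)) 0 1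
                    (Lf r ^ S n / (INR (fact (S n)) * r))).
      { set (F := fun t => Lf (t * r) ^ S n / (INR (fact (S n)) * r)).
        replace (Lf r ^ S n / (INR (fact (S n)) * r)) with (@minus R_AbelianGroup (F 1) (F 0)).
        apply (@is_RInt_derive R_CompleteNormedModule F).
        - intros x Hx. rewrite Rmin_left in Hx by lra. rewrite Rmax_right in Hx by lra.
          unfold F. replace (INR (fact (S n))) with (INR (S n) * INR (fact n)) by (rewrite <- mult_INR; reflexivity).
          unfold Lf. auto_derive. nra.
          change (match n with | 0%nat => 1 | S _ => INR n + 1 end) with (INR (S n)).
          replace (1 + - (x * r)) with (1 - x * r) by ring.
          field. split; [apply INR_fact_neq_0|]. split; [nra|]. split; [auto| apply not_0_INR; lia].
        - intros x Hx. rewrite Rmin_left in Hx by lra. rewrite Rmax_right in Hx by lra.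
          apply (@ex_derive_continuous R_AbsRing R_NormedModule). unfold Lf. auto_derive.
          repeat split; try nra; try apply INR_fact_neq_0.
        - unfold F, minus, plus, opp; simpl. rewrite Rmult_0_l, Lf0, Rmult_1_l. 
          rewrite Rmult_0_l. unfold Rdiv. ring. }
      assert (Hle : Lf r ^ S n / (INR (fact (S n)) * r) <= Hn (S n) r).
      { apply (is_RInt_le _ _ 0 1 _ _ ltac:(lra) I (Hn_RInt n r ltac:(lra))).
        intros t Ht. unfold Rdiv. apply Rmult_le_compat_r.
        apply Rlt_le, Rinv_0_lt_compat; nra. apply IHn. split; nra. }
      eapply Rle_trans; [|exact Hle].
      assert (0 <= Lf r ^ S n) by (apply pow_le, Lf_nonneg; auto).
      pose proof (INR_fact_lt_0 (S n)).
      unfold Rdiv. apply Rmult_le_compat_l; auto.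
      apply Rinv_le_contravar. nra. 
      rewrite <- (Rmult_1_r (INR (fact (S n)))) at 2. apply Rmult_le_compat_l; lra.
Qed.

Lemma exp_ge1 t : 1 + t <= exp t.
Proof. destruct (Req_dec t 0) as [->|H]. rewrite exp_0; lra. left; apply exp_ineq1; auto. Qed.

Lemma Lf_bound r : 0 <= r < 1 -> Lf r * (1 - r) <= r.
Proof.
  intros Hr. pose proof (exp_ge1 (Lf r)) as H.
  unfold Lf in *. rewrite <- ln_Rinv in H by lra. rewrite exp_ln in H.
  2: apply Rinv_0_lt_compat; lra.
  rewrite <- ln_Rinv by lra.
  apply Rmult_le_compat_r with (r := 1 - r) in H; [|lra].
  rewrite Rinv_l in H by lra. lra.
Qed.

Lemma pow_diff a n : 1 <= a -> a ^ S n - 1 <= INR (S n) * (a - 1) * a ^ n.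
Proof.
  intros Ha. induction n.
  - simpl. lra.
  - assert (1 <= a ^ S n) by (apply pow_R1_Rle; auto).
    rewrite S_INR.
    replace (a ^ S (S n) - 1) with (a * (a ^ S n - 1) + (a - 1)) by (simpl; ring).
    replace (a ^ S n) with (a * a ^ n) at 2 by reflexivity.
    apply Rle_trans with (a * (INR (S n) * (a - 1) * a ^ n) + (a - 1) * a ^ S n).
    + apply Rplus_le_compat. apply Rmult_le_compat_l; lra.
      rewrite <- (Rmult_1_r (a - 1)) at 1. apply Rmult_le_compat_l; lra.
    + simpl. right. ring.
Qed.

Lemma Hn_upper n r : 0 <= r < 1 -> Hn n r <= (1 + Lf r) ^ n.
Proof.
  revert r. induction n; intros r Hr.
  - simpl. rewrite Hn0. lra.
  - destruct (Req_dec r 0) as [->|Hr0].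
    + rewrite Lf0, Rplus_0_r, pow1. unfold Hn. rewrite powop_0. unfold cone. simpl. lra.
    + assert (I : is_RInt (fun t => (1 + Lf (t * r)) ^ n / (1 - t * r)) 0 1
                    (((1 + Lf r) ^ S n - 1) / (INR (S n) * r))).
      { set (F := fun t => (1 + Lf (t * r)) ^ S n / (INR (S n) * r)).
        replace (((1 + Lf r) ^ S n - 1) / (INR (S n) * r)) with (@minus R_AbelianGroup (F 1) (F 0)).
        apply (@is_RInt_derive R_CompleteNormedModule F).
        - intros x Hx. rewrite Rmin_left in Hx by lra. rewrite Rmax_right in Hx by lra.
          unfold F. unfold Lf. auto_derive. nra.
          change (match n with | 0%nat => 1 | S _ => INR n + 1 end) with (INR (S n)).
          replace (1 + - (x * r)) with (1 - x * r) by ring.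
          field. split; [nra|]. split; [auto| apply not_0_INR; lia].
        - intros x Hx. rewrite Rmin_left in Hx by lra. rewrite Rmax_right in Hx by lra.
          apply (@ex_derive_continuous R_AbsRing R_NormedModule). unfold Lf. auto_derive.
          repeat split; try nra.
        - unfold F, minus, plus, opp; simpl. rewrite Rmult_0_l, Lf0, Rmult_1_l. 
          rewrite Rplus_0_r, pow1. unfold Rdiv. ring. }
      assert (Hle : Hn (S n) r <= ((1 + Lf r) ^ S n - 1) / (INR (S n) * r)).
      { apply (is_RInt_le _ _ 0 1 _ _ ltac:(lra) (Hn_RInt n r ltac:(lra)) I).
        intros t Ht. unfold Rdiv. apply Rmult_le_compat_r.
        apply Rlt_le, Rinv_0_lt_compat; nra. apply IHn. split; nra. }
      eapply Rle_trans; [exact Hle|].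
      set (a := 1 + Lf r).
      assert (Ha : 1 <= a) by (unfold a; pose proof (Lf_nonneg r Hr); lra).
      pose proof (pow_diff a n Ha) as P.
      assert (HL : a - 1 <= r * a) by (unfold a; pose proof (Lf_bound r Hr); lra).
      assert (Hn0' : 0 < INR (S n)) by (apply lt_0_INR; lia).
      assert (Hr' : 0 < r) by lra.
      assert (0 <= a ^ n) by (apply pow_le; lra).
      apply Rmult_le_reg_r with (INR (S n) * r). nra.
      unfold Rdiv. rewrite Rmult_assoc, Rinv_l by nra. rewrite Rmult_1_r.
      eapply Rle_trans; [exact P|]. 
      replace (a ^ S n * (INR (S n) * r)) with (INR (S n) * (r * a) * a ^ n) by (simpl; ring).
      apply Rmult_le_compat_r; auto. apply Rmult_le_compat_l; lra.
Qed.

Definition xof (l : R) : R := 1 - exp (- l).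

Lemma xof_range l : 0 < l -> 0 < xof l < 1.
Proof.
  intros H. unfold xof. pose proof (exp_pos (- l)).
  assert (exp (- l) < 1) by (rewrite <- exp_0; apply exp_increasing; lra). lra.
Qed.

Lemma Lf_xof l : Lf (xof l) = l.
Proof. unfold Lf, xof. replace (1 - (1 - exp (- l))) with (exp (- l)) by ring. rewrite ln_exp. ring. Qed.

Lemma vk_xof k l : 1 < l -> vk k (RtoC (xof l)) = (/ l) ^ k.
Proof.
  intros Hl. unfold vk, v. pose proof (xof_range l ltac:(lra)) as Hx.
  rewrite Cmod_RtoC, Rabs_right by lra.
  destruct (Rle_dec (xof l) (1 - / exp 1)) as [E|E].
  - exfalso. unfold xof in E. rewrite <- exp_Ropp in E.
    assert (exp (- (1)) > exp (- l)) by (apply exp_increasing; lra). lra.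
  - fold (Lf (xof l)). rewrite Lf_xof. reflexivity.
Qed.

Definition pev (x : R) (f : C -> C) : R := Cmod (f (RtoC x)).

Lemma pev_cont l : 1 < l -> cont_seminorm (pev (xof l)).
Proof.
  intros Hl. split; [split; [|split]|].
  - intros f _. apply Cmod_ge_0.
  - intros f g _ _. apply Cmod_triangle.
  - intros a f _. unfold pev, fscal. apply Cmod_mult.
  - intros k. exists (l ^ k). intros f M _ HM. unfold pev.
    pose proof (xof_range l ltac:(lra)) as Hx.
    pose proof (HM _ (inD_R (xof l) ltac:(lra))) as H. rewrite vk_xof in H by auto.
    rewrite <- Rinv_pow in H by lra.
    assert (0 < l ^ k) by (apply pow_lt; lra).
    apply Rmult_le_compat_l with (r := l ^ k) in H; [|lra].
    rewrite <- Rmult_assoc, Rinv_r, Rmult_1_l in H by lra. exact H.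
Qed.

Lemma psum_lower N K x : 0 <= x < 1 ->
  (INR N - INR K) * Hn K x <= Re (psum Ces N cone (RtoC x)) /\ 0 <= Re (psum Ces N cone (RtoC x)).
Proof.
  intros Hx. induction N.
  - simpl. pose proof (Hn_ge1 K x Hx). pose proof (pos_INR K). split; nra.
  - destruct IHN as [IH1 IH2]. simpl psum. unfold fadd. simpl Re.
    change (fst (Ces (powop Ces N cone) (RtoC x))) with (Hn (S N) x).
    change (fst (psum Ces N cone (RtoC x))) with (Re (psum Ces N cone (RtoC x))).
    pose proof (Hn_ge1 (S N) x Hx). pose proof (Hn_ge1 K x Hx). rewrite S_INR.
    split; [|lra].
    destruct (Compare_dec.le_lt_dec K (S N)) as [HK|HK].
    + pose proof (Hn_mono_le K (S N) x HK Hx). lra.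
    + apply lt_INR in HK. rewrite S_INR in HK. 
      assert ((INR N + 1 - INR K) * Hn K x <= 0) by nra. lra.
Qed.

Theorem not_ME : ~ mean_ergodic_VH Ces.
Proof.
  intros ME. destruct (ME cone (ex_intro _ 0%nat one_VH)) as [g [[k [_ [M HM]]] Hlim]].
  set (K := S k).
  pose proof (INR_fact_lt_0 K) as HF.
  set (l := 2 * INR (fact K) * (Rabs M + 1) + 2).
  assert (Hl : 1 < l) by (unfold l; pose proof (Rabs_pos M); nra).
  set (x := xof l).
  pose proof (xof_range l ltac:(lra)) as Hx. fold x in Hx.
  assert (Hlk : 0 < l ^ k) by (apply pow_lt; lra).
  assert (Hg : Cmod (g (RtoC x)) <= Rabs M * l ^ k).
  { pose proof (HM _ (inD_R x ltac:(lra))) as H. unfold x in H. rewrite vk_xof in H by auto.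
    rewrite <- Rinv_pow in H by lra. fold x in H.
    apply Rmult_le_compat_l with (r := l ^ k) in H; [|lra].
    rewrite <- Rmult_assoc, Rinv_r, Rmult_1_l in H by lra.
    pose proof (Rle_abs M). nra. }
  assert (HK : l ^ K / INR (fact K) <= Hn K x).
  { pose proof (Hn_lower K x ltac:(lra)) as H. unfold x in H. rewrite Lf_xof in H. exact H. }
  assert (HK2 : 2 * Rabs M * l ^ k + 2 <= Hn K x).
  { eapply Rle_trans; [|exact HK].
    apply Rmult_le_reg_r with (INR (fact K)); auto.
    replace (l ^ K) with (l * l ^ k) by reflexivity. replace (l * l ^ k / INR (fact K) * INR (fact K)) with (l * l ^ k) by (field; lra).
    assert (1 <= l ^ k) by (apply pow_R1_Rle; lra).
    assert (1 <= INR (fact K)) by (apply (le_INR 1); apply lt_O_fact).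
    assert (INR (fact K) * 1 <= INR (fact K) * l ^ k) by (apply Rmult_le_compat_l; lra). assert (E : l * l ^ k = (2 * INR (fact K) * (Rabs M + 1) + 2) * l ^ k) by reflexivity. rewrite E. pose proof (Rabs_pos M). nra. }
  specialize (Hlim (pev x) (pev_cont l Hl)).
  apply is_lim_seq_spec in Hlim. destruct (Hlim (mkposreal 1 ltac:(lra))) as [N0 HN0].
  specialize (HN0 (N0 + 2 * K)%nat ltac:(lia)). cbv beta in HN0.
  set (N := S (N0 + 2 * K)) in *.
  unfold pev, fsub, cesmean, fscal in HN0.
  rewrite Rminus_0_r, Rabs_right in HN0 by (apply Rle_ge, Cmod_ge_0).
  destruct (psum_lower N K x ltac:(lra)) as [P1 P2].
  assert (HNK : 2 * INR K <= INR N) by (unfold N; rewrite <- (mult_INR 2); apply le_INR; lia).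
  assert (HN : 0 < INR N) by (unfold N; apply lt_0_INR; lia).
  set (Sm := Re (psum Ces N cone (RtoC x))) in *.
  set (Z := (RtoC (/ INR N) * psum Ces N cone (RtoC x) - g (RtoC x))%C) in *.
  assert (HZ : Re Z = / INR N * Sm - Re (g (RtoC x))).
  { unfold Z, Sm, Re, Cminus, Cplus, Copp, Cmult, RtoC. cbn [fst snd]. ring. }
  pose proof (re_le_Cmod Z) as R1. pose proof (re_le_Cmod (g (RtoC x))) as R2.
  assert (HS : INR N * (Hn K x / 2) <= Sm).
  { eapply Rle_trans; [|exact P1]. pose proof (Hn_ge1 K x ltac:(lra)). nra. }
  assert (HS2 : Hn K x / 2 <= / INR N * Sm).
  { apply Rmult_le_reg_l with (INR N); auto. rewrite <- Rmult_assoc, Rinv_r, Rmult_1_l by lra. lra. }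
  apply Rabs_le_between in R1. apply Rabs_le_between in R2. change (Cmod Z < 1) in HN0. lra.
Qed.

Lemma sup_bnd (u : nat -> R) B : (forall j, 0 <= u j <= B) ->
  exists s, Sup_seq (fun j => Finite (u j)) = Finite s /\ 0 <= s <= B /\ forall j, u j <= s.
Proof.
  intros Hu.
  assert (Hc : Sup_seq (fun _ : nat => Finite B) = Finite B).
  { apply is_sup_seq_unique. intros eps. split.
    - intros n. simpl. pose proof (cond_pos eps). lra.
    - exists 0%nat. simpl. pose proof (cond_pos eps). lra. }
  assert (H1 : Rbar_le (Sup_seq (fun j => Finite (u j))) (Finite B)).
  { rewrite <- Hc. apply Sup_seq_le. intros n. simpl. apply Hu. }
  assert (H2 : forall j, Rbar_le (Finite (u j)) (Sup_seq (fun j => Finite (u j)))).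
  { intros j. apply Sup_seq_minor_le with j. simpl. lra. }
  destruct (Sup_seq (fun j => Finite (u j))) as [s| |] eqn:E.
  - exists s. split; auto. pose proof (H2 0%nat) as H3. simpl in H1, H3. pose proof (Hu 0%nat).
    split; [lra|]. intros j. exact (H2 j).
  - simpl in H1. contradiction.
  - specialize (H2 0%nat). simpl in H2. contradiction.
Qed.

Definition ell (j : nat) : R := INR (fact (2 * j + 2)).
Definition xj (j : nat) : R := xof (ell j).
Definition term (f : C -> C) (j : nat) : R := Cmod (f (RtoC (xj j))) / ell j ^ j.
Definition ps (f : C -> C) : R := real (Sup_seq (fun j => Finite (term f j))).

Lemma ell_ge2 j : 2 <= ell j.
Proof.
  unfold ell. replace 2 with (INR 2) by (simpl; ring). apply le_INR.
  replace (2 * j + 2)%nat with (S (S (2 * j))) by lia.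
  change (fact (S (S (2 * j)))) with (S (S (2 * j)) * fact (S (2 * j)))%nat.
  pose proof (lt_O_fact (S (2 * j))). nia.
Qed.

Lemma ell_mono i j : (i <= j)%nat -> ell i <= ell j.
Proof. intros H. unfold ell. apply le_INR, fact_le. lia. Qed.

Lemma term_nonneg f j : 0 <= term f j.
Proof.
  unfold term. apply Rmult_le_pos; [apply Cmod_ge_0|].
  apply Rlt_le, Rinv_0_lt_compat, pow_lt. pose proof (ell_ge2 j); lra.
Qed.

Lemma term_Hv k f M : Hv k f -> wbound k f M -> forall j, term f j <= M * ell k ^ k.
Proof.
  intros _ HM j. unfold term.
  pose proof (ell_ge2 j) as Hl. 
  pose proof (xof_range (ell j) ltac:(lra)) as Hx.
  pose proof (HM _ (inD_R (xj j) ltac:(unfold xj; lra))) as H. unfold xj in H. rewrite vk_xof in H by lra.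
  rewrite <- Rinv_pow in H by lra. fold (xj j) in H.
  assert (Hlj : 0 < ell j ^ j) by (apply pow_lt; lra).
  assert (Hlk : 0 < ell j ^ k) by (apply pow_lt; lra).
  assert (HM0 : 0 <= M) by (eapply Rle_trans; [|exact H]; apply Rmult_le_pos; [apply Rlt_le, Rinv_0_lt_compat; lra| apply Cmod_ge_0]).
  assert (H' : Cmod (f (RtoC (xj j))) <= M * ell j ^ k).
  { apply Rmult_le_compat_l with (r := ell j ^ k) in H; [|lra].
    rewrite <- Rmult_assoc, Rinv_r, Rmult_1_l in H by lra. lra. }
  assert (Hq : ell j ^ k / ell j ^ j <= ell k ^ k).
  { destruct (Compare_dec.le_lt_dec k j) as [Hkj|Hkj].
    - apply Rle_trans with 1.
      + unfold Rdiv. apply Rmult_le_reg_r with (ell j ^ j); auto.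
        rewrite Rmult_assoc, Rinv_l, Rmult_1_r, Rmult_1_l by lra.
        replace (ell j ^ j) with (ell j ^ k * ell j ^ (j - k)) by (rewrite <- pow_add; f_equal; lia).
        rewrite <- (Rmult_1_r (ell j ^ k)) at 1. apply Rmult_le_compat_l; [lra|].
        apply pow_R1_Rle; lra.
      + apply pow_R1_Rle. pose proof (ell_ge2 k); lra.
    - apply Rle_trans with (ell j ^ k).
      + unfold Rdiv. rewrite <- (Rmult_1_r (ell j ^ k)) at 2. apply Rmult_le_compat_l; [lra|].
        rewrite <- Rinv_1. apply Rinv_le_contravar; [lra|]. apply pow_R1_Rle; lra.
      + apply pow_incr. split; [lra|]. apply ell_mono. lia. }
  apply Rle_trans with (M * ell j ^ k / ell j ^ j).
  - unfold Rdiv. apply Rmult_le_compat_r; [apply Rlt_le, Rinv_0_lt_compat; lra| exact H'].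
  - unfold Rdiv. rewrite Rmult_assoc. apply Rmult_le_compat_l; auto.
Qed.

Lemma ps_VH f : VH f -> exists B, forall j, 0 <= term f j <= B.
Proof.
  intros [k [Hh [M HM]]]. exists (M * ell k ^ k). intros j. split; [apply term_nonneg|].
  eapply term_Hv; eauto. split; eauto.
Qed.

Lemma ps_cont : cont_seminorm ps.
Proof.
  split; [split; [|split]|].
  - intros f Hf. destruct (ps_VH f Hf) as [B HB]. destruct (sup_bnd _ _ HB) as [s [E [Hs _]]].
    unfold ps. rewrite E. simpl. lra.
  - intros f g Hf Hg. 
    destruct (ps_VH f Hf) as [B1 HB1]. destruct (sup_bnd _ _ HB1) as [s1 [E1 [Hs1 T1]]].
    destruct (ps_VH g Hg) as [B2 HB2]. destruct (sup_bnd _ _ HB2) as [s2 [E2 [Hs2 T2]]].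
    assert (HB : forall j, 0 <= term (fadd f g) j <= s1 + s2).
    { intros j. split; [apply term_nonneg|].
      apply Rle_trans with (term f j + term g j); [|specialize (T1 j); specialize (T2 j); lra].
      unfold term, fadd, Rdiv. rewrite <- Rmult_plus_distr_r. apply Rmult_le_compat_r.
      apply Rlt_le, Rinv_0_lt_compat, pow_lt. pose proof (ell_ge2 j); lra.
      apply Cmod_triangle. }
    destruct (sup_bnd _ _ HB) as [s [E [Hs _]]].
    unfold ps. rewrite E, E1, E2. simpl. lra.
  - intros a f Hf. destruct (ps_VH f Hf) as [B HB]. destruct (sup_bnd _ _ HB) as [s [E _]].
    unfold ps. rewrite (Sup_seq_ext _ (fun j => Rbar_mult (Cmod a) (term f j))).
    + rewrite Sup_seq_scal_l by apply Cmod_ge_0. rewrite E. reflexivity.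
    + intros j. simpl. unfold term, fscal. rewrite Cmod_mult. unfold Rdiv. f_equal. ring.
  - intros k. exists (ell k ^ k). intros f M Hh HM.
    assert (HB : forall j, 0 <= term f j <= M * ell k ^ k).
    { intros j. split; [apply term_nonneg| eapply term_Hv; eauto]. }
    destruct (sup_bnd _ _ HB) as [s [E [Hs _]]]. unfold ps. rewrite E. simpl. lra.
Qed.

Lemma xj_range j : 0 < xj j < 1.
Proof. unfold xj. apply xof_range. pose proof (ell_ge2 j). lra. Qed.

Lemma term_pow n j : term (powop Ces n cone) j = Hn n (xj j) / ell j ^ j.
Proof.
  pose proof (xj_range j). unfold term. rewrite pow_one_real by lra.
  rewrite Cmod_RtoC, Rabs_right. reflexivity.
  pose proof (Hn_ge1 n (xj j) ltac:(lra)). lra.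
Qed.

Lemma term_pow_bnd n j : 0 <= term (powop Ces n cone) j <= 2 ^ n + (1 + ell n) ^ n.
Proof.
  split; [apply term_nonneg|]. rewrite term_pow.
  pose proof (xj_range j). pose proof (ell_ge2 j) as Hl.
  pose proof (Hn_upper n (xj j) ltac:(lra)) as HU. replace (Lf (xj j)) with (ell j) in HU by (unfold xj; rewrite Lf_xof; reflexivity).
  assert (Hlj : 0 < ell j ^ j) by (apply pow_lt; lra).
  assert (0 <= 2 ^ n) by (apply pow_le; lra).
  assert (0 <= (1 + ell n) ^ n) by (apply pow_le; pose proof (ell_ge2 n); lra).
  assert (A : Hn n (xj j) / ell j ^ j <= (1 + ell j) ^ n / ell j ^ j).
  { unfold Rdiv. apply Rmult_le_compat_r; [apply Rlt_le, Rinv_0_lt_compat; lra| exact HU]. }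
  destruct (Compare_dec.le_lt_dec n j) as [Hnj|Hnj].
  - assert (B : (1 + ell j) ^ n / ell j ^ j <= 2 ^ n).
    { apply Rmult_le_reg_r with (ell j ^ j); auto. unfold Rdiv.
      rewrite Rmult_assoc, Rinv_l, Rmult_1_r by lra.
      apply Rle_trans with ((2 * ell j) ^ n).
      - apply pow_incr. lra.
      - rewrite Rpow_mult_distr. apply Rmult_le_compat_l; auto.
        replace (ell j ^ j) with (ell j ^ n * ell j ^ (j - n)) by (rewrite <- pow_add; f_equal; lia).
        rewrite <- (Rmult_1_r (ell j ^ n)) at 1. apply Rmult_le_compat_l; [apply pow_le; lra|].
        apply pow_R1_Rle; lra. }
    lra.
  - assert (B : (1 + ell j) ^ n / ell j ^ j <= (1 + ell n) ^ n).
    { apply Rle_trans with ((1 + ell j) ^ n).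
      - unfold Rdiv. rewrite <- (Rmult_1_r ((1 + ell j) ^ n)) at 2. apply Rmult_le_compat_l.
        apply pow_le; lra. rewrite <- Rinv_1. apply Rinv_le_contravar; [lra|]. apply pow_R1_Rle; lra.
      - apply pow_incr. split; [lra|]. pose proof (ell_mono j n ltac:(lia)). lra. }
    lra.
Qed.

Lemma term_lower j : INR j <= term (powop Ces (2 * j) cone) j.
Proof.
  destruct j as [|j'].
  - simpl. apply term_nonneg.
  - set (j := S j'). rewrite term_pow.
    pose proof (xj_range j). pose proof (ell_ge2 j) as Hl.
    pose proof (Hn_lower (2 * j) (xj j) ltac:(lra)) as HL. replace (Lf (xj j)) with (ell j) in HL by (unfold xj; rewrite Lf_xof; reflexivity).
    assert (Hlj : 0 < ell j ^ j) by (apply pow_lt; lra).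
    pose proof (INR_fact_lt_0 (2 * j)) as HF.
    assert (E : ell j ^ (2 * j) / INR (fact (2 * j)) / ell j ^ j = ell j ^ j / INR (fact (2 * j))).
    { replace (2 * j)%nat with (j + j)%nat by lia. rewrite pow_add. field. split; [apply INR_fact_neq_0| lra]. }
    assert (Hfact : INR j * INR (fact (2 * j)) <= ell j).
    { unfold ell. rewrite <- mult_INR. apply le_INR.
      replace (2 * j + 2)%nat with (S (S (2 * j))) by lia.
      change (fact (S (S (2 * j)))) with (S (S (2 * j)) * (S (2 * j) * fact (2 * j)))%nat.
      nia. }
    assert (Hp : ell j <= ell j ^ j).
    { replace (ell j ^ j) with (ell j * ell j ^ j') by reflexivity. rewrite <- (Rmult_1_r (ell j)) at 1. apply Rmult_le_compat_l; [lra|].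
      apply pow_R1_Rle. lra. }
    apply Rle_trans with (ell j ^ j / INR (fact (2 * j))).
    + apply Rmult_le_reg_r with (INR (fact (2 * j))); auto. unfold Rdiv.
      rewrite Rmult_assoc, Rinv_l, Rmult_1_r by lra. lra.
    + rewrite <- E. unfold Rdiv. apply Rmult_le_compat_r; [apply Rlt_le, Rinv_0_lt_compat; lra|].
      exact HL.
Qed.

Theorem not_PB : ~ power_bounded_VH Ces.
Proof.
  intros PB. destruct (PB ps ps_cont) as [q [[_ Hq] Hpq]]. destruct (Hq 0%nat) as [c Hc].
  assert (Hq1 : q cone <= c * 1).
  { apply Hc. apply one_VH. intros z _. unfold vk, cone. rewrite pow_O, Cmod_RtoC, Rabs_R1. lra. }
  destruct (INR_unbounded c) as [j Hj].
  specialize (Hpq (2 * j)%nat cone (ex_intro _ 0%nat one_VH)).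
  destruct (sup_bnd _ _ (term_pow_bnd (2 * j))) as [s [E [_ Hs]]].
  unfold ps in Hpq. rewrite E in Hpq. simpl in Hpq.
  pose proof (term_lower j). specialize (Hs j). lra.
Qed.

Theorem proposition2p6 :
  ~ power_bounded_VH Ces /\ ~ mean_ergodic_VH Ces /\ ~ supercyclic_VH Ces.
Proof.
  split; [exact not_PB | split; [exact not_ME | exact not_super]].
Qed.
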